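(* For $N\in\mathbb{N}$ (so $N\ge1$) and $k\in\mathbb{N}\cup\{0\}$, \begin{align*} \mathrm{Ch}_{k+N,\lambda}(x)&=\lambda^{N}\sum_{r=1}^{N}\sum_{i=0}^{r}a^{(\lambda)}_{i,r-i}(N,x)\,\lambda^{-r}2^{-i}\sum_{m+n+a=k}\binom{k}{m,n,a}\Bigl(-\tfrac12\Bigr)^{m}(-1)^{n}(i+m-1)_m\,(r+n-i-1)_n\\ &\qquad\times\sum_{l+e+f+s=a}(-1)^{l}\lambda^{a-s}\frac{\binom{a}{l,e,f,s}}{\binom{e+m}{m}\binom{f+n}{n}}\,(N+l-1)_l\,S_1(e+m,m)\,S_1(f+n,n)\,\mathrm{Ch}_{s,\lambda}(x), \end{align*} where the inner sums run over nonnegative integers, and for $1\le r\le N$, $0\le i\le r$, \[ a^{(\lambda)}_{i,r-i}(N,x)=(-1)^{N+i-r}\, i!\, S_{1,i-1}(r-i)\,(N-1)!\,H_{N-1,r-1}\,(x)_{r-i}. \]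
   Context: Let $\lambda\neq0$. The $\lambda$-Changhee (degenerate Changhee) polynomials $\mathrm{Ch}_{n,\lambda}(x)$ are defined by \[ \frac{2\lambda}{2\lambda+\log(1+\lambda t)}\Bigl(1+\frac{\log(1+\lambda t)}{\lambda}\Bigr)^{x}=\sum_{n=0}^{\infty}\mathrm{Ch}_{n,\lambda}(x)\frac{t^n}{n!}. \] $(y)_0=1$ and $(y)_n=y(y-1)\cdots(y-n+1)$ for $n\ge1$ (falling factorial; in particular $(n-1)_n=0$ for $n\ge1$). $S_1(n,l)$ are the Stirling numbers of the first kind, defined by $(y)_n=\sum_{l=0}^n S_1(n,l)y^l$. Multinomial coefficients $\binom{k}{m,n,a}=\frac{k!}{m!\,n!\,a!}$, etc. Generalized harmonic numbers: $H_{N,0}=1$ for all integers $N\ge 0$; $H_{N,1}=1+\frac12+\cdots+\frac1N$ for $N\ge1$; and for $2\le j\le N$, $H_{N,j}=\frac{H_{N-1,j-1}}{N}+\frac{H_{N-2,j-1}}{N-1}+\cdots+\frac{H_{j-1,j-1}}{j}$. Generalized Changhee power sums (for $k=1$), for integers $N\ge0$: $S_{1,-1}(N)=1$, $S_{1,0}(N)=N+1$, $S_{1,j}(N)=\sum_{l=0}^{N}S_{1,j-1}(l)$ for $j\ge1$. *)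

(* Defs.v *)
From HB Require Import structures.
From mathcomp Require Import all_boot all_order all_algebra.
Set Implicit Arguments. Unset Strict Implicit. Unset Printing Implicit Defensive.
Import Order.TTheory GRing.Theory Num.Theory.
Local Open Scope ring_scope.

Definition ffact (R : numFieldType) (y : R) (n : nat) : R :=
  \prod_(k < n) (y - k%:R).

Definition stirling1 (n l : nat) : int :=
  (\prod_(k < n) ('X - (k%:Z)%:P) : {poly int})`_l.

Fixpoint harm (R : numFieldType) (j N : nat) {struct j} : R :=
  match j with
  | 0 => 1
  | j'.+1 => \sum_(j'.+1 <= k < N.+1) harm R j' k.-1 / k%:R
  end.
Definition H (R : numFieldType) (N j : nat) : R := harm R j N.

(* Generalized Changhee power sums with SHIFTED index:
   chps i N = S_{1,i-1}(N).  So chps 0 N = S_{1,-1}(N) = 1 and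
   chps (i+1) N = \sum_{l=0}^{N} chps i l  (giving chps 1 N = N+1). *)
Fixpoint chps (i N : nat) {struct i} : nat :=
  match i with
  | 0 => 1
  | i'.+1 => \sum_(l < N.+1) chps i' l
  end.

(* Truncation (up to degree n) of the power series log(1 + lam t)
   = \sum_{k>=1} (-1)^{k-1} lam^k t^k / k. *)
Definition logtr (R : numFieldType) (lam : R) (n : nat) : {poly R} :=
  \sum_(1 <= k < n.+1) (((-1) ^+ k.-1 * lam ^+ k / k%:R) *: 'X^k).

(* The generating function
     2 lam / (2 lam + log(1+lam t)) * (1 + log(1+lam t)/lam)^x
   as a formal power series, with L = log(1+lam t) (no constant term):
     2 lam / (2 lam + L) = \sum_j (- L/(2 lam))^j,
     (1 + L/lam)^x       = \sum_j binom(x,j) (L/lam)^j,  binom(x,j) = (x)_j/j!.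
   Truncating L and both sums at degree n leaves the coefficients of
   t^0..t^n unchanged. *)
Definition chgen (R : numFieldType) (lam x : R) (n : nat) : {poly R} :=
  (\sum_(j < n.+1) ((- (2 * lam)^-1) ^+ j *: (logtr lam n) ^+ j)) *
  (\sum_(j < n.+1) ((ffact x j / j`!%:R * lam ^- j) *: (logtr lam n) ^+ j)).

Definition Ch (R : numFieldType) (n : nat) (lam x : R) : R :=
  n`!%:R * (chgen lam x n)`_n.

Definition acoef (R : numFieldType) (i r N : nat) (x : R) : R :=
  (-1) ^+ (N + i - r) * i`!%:R * (chps i (r - i))%:R * (N.-1)`!%:R
  * H R N.-1 r.-1 * ffact x (r - i).

Definition multi3 (R : numFieldType) (k m n a : nat) : R :=
  k`!%:R / (m`!%:R * n`!%:R * a`!%:R).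
Definition multi4 (R : numFieldType) (a l e f s : nat) : R :=
  a`!%:R / (l`!%:R * e`!%:R * f`!%:R * s`!%:R).

(* Main.v *)
Require Import Defs.
From HB Require Import structures.
From mathcomp Require Import all_boot all_order all_algebra.
From mathcomp.algebra_tactics Require Import ring.
From mathcomp Require Import zify.
Import Order.TTheory GRing.Theory Num.Theory.
Local Open Scope ring_scope.

Section Eqm.
Context {R : numFieldType}.
Implicit Types p q u g : {poly R}.

Definition eqm (n : nat) p q := forall i, (i < n)%N -> p`_i = q`_i.

Lemma eqm_refl n p : eqm n p p. Proof. by []. Qed.
Lemma eqm_sym n p q : eqm n p q -> eqm n q p. Proof. by move=> h i hi; rewrite h. Qed.
Lemma eqm_trans n p q r : eqm n p q -> eqm n q r -> eqm n p r.
Proof. by move=> h1 h2 i hi; rewrite h1 // h2. Qed.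
Lemma eqm_le m n p q : (m <= n)%N -> eqm n p q -> eqm m p q.
Proof. by move=> hmn h i hi; apply: h; apply: leq_trans hmn. Qed.
Lemma eqm_eq n p q : p = q -> eqm n p q. Proof. by move->. Qed.
Lemma eqmD n p q p' q' : eqm n p p' -> eqm n q q' -> eqm n (p + q) (p' + q').
Proof. by move=> h1 h2 i hi; rewrite !coefD h1 ?h2. Qed.
Lemma eqmB n p q p' q' : eqm n p p' -> eqm n q q' -> eqm n (p - q) (p' - q').
Proof. by move=> h1 h2 i hi; rewrite !coefB h1 ?h2. Qed.
Lemma eqmZ n c p p' : eqm n p p' -> eqm n (c *: p) (c *: p').
Proof. by move=> h i hi; rewrite !coefZ h. Qed.
Lemma eqmM n p q p' q' : eqm n p p' -> eqm n q q' -> eqm n (p * q) (p' * q').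
Proof.
move=> h1 h2 i hi; rewrite !coefM; apply: eq_bigr => j _.
have hj := ltn_ord j.
rewrite h1 ?h2 //; lia.
Qed.
Lemma eqmX n p p' k : eqm n p p' -> eqm n (p ^+ k) (p' ^+ k).
Proof. by move=> h; elim: k => [|k IH]; rewrite ?expr0 // !exprS; apply: eqmM. Qed.
Lemma eqm_sum n (I : Type) (r : seq I) (P : pred I) (F G : I -> {poly R}) :
  (forall i, P i -> eqm n (F i) (G i)) ->
  eqm n (\sum_(i <- r | P i) F i) (\sum_(i <- r | P i) G i).
Proof. by move=> h j hj; rewrite !coef_sum; apply: eq_bigr => i Pi; apply: h. Qed.
Lemma eqm_deriv n p q : eqm n p q -> eqm n.-1 p^`() q^`().
Proof. by move=> h i hi; rewrite !coef_deriv h //; lia. Qed.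

Lemma coefX_low u : u`_0 = 0 -> forall j i, (i < j)%N -> (u ^+ j)`_i = 0.
Proof.
move=> u0; elim=> [//|j IH] i hi.
rewrite exprS coefM big1 // => t _.
case: (nat_of_ord t) (ltn_ord t) => [|t'] ht; first by rewrite u0 mul0r.
by rewrite IH ?mulr0 //; lia.
Qed.

Lemma sum_extend (F : nat -> R) n S : (n <= S)%N ->
  (forall m, (n <= m)%N -> (m < S)%N -> F m = 0) ->
  \sum_(m < S) F m = \sum_(m < n) F m.
Proof.
move=> hnS hF; rewrite (big_ord_widen S F hnS) /= [RHS]big_mkcond /=.
apply: eq_bigr => m _; case: ifP => // /negbT; rewrite -leqNgt => hm.
by rewrite hF.
Qed.

Lemma coef_comp_trunc g u n i : u`_0 = 0 -> (i < n)%N ->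
  (g \Po u)`_i = \sum_(m < n) g`_m * (u ^+ m)`_i.
Proof.
move=> u0 hi; rewrite coef_comp_poly.
rewrite -(@sum_extend (fun m => g`_m * (u ^+ m)`_i) _ _ (leq_addr n (size g))); last first.
  by move=> m hm _; rewrite nth_default ?mul0r.
rewrite -(@sum_extend (fun m => g`_m * (u ^+ m)`_i) _ _ (leq_addl (size g) n)) //.
by move=> m hm _; rewrite coefX_low ?mulr0 //; lia.
Qed.

Lemma eqm_comp n g g' u u' : u`_0 = 0 -> eqm n g g' -> eqm n u u' ->
  eqm n (g \Po u) (g' \Po u').
Proof.
move=> u0 hg hu i hi.
have u0' : u'`_0 = 0 by rewrite -hu //; lia.
rewrite (coef_comp_trunc _ _ _ _ u0 hi) (coef_comp_trunc _ _ _ _ u0' hi).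
apply: eq_bigr => m _; by rewrite hg ?(eqmX _ _ _ m hu).

Qed.

Lemma comp_trunc n g u : u`_0 = 0 ->
  eqm n (g \Po u) (\sum_(m < n) g`_m *: u ^+ m).
Proof.
move=> u0 i hi; rewrite (coef_comp_trunc _ _ _ _ u0 hi) coef_sum.
by apply: eq_bigr => m _; rewrite coefZ.
Qed.

Lemma comp_polyXe g u k : (g \Po u) ^+ k = (g ^+ k) \Po u.
Proof.
elim: k => [|k IH]; first by rewrite !expr0 comp_polyC.
by rewrite !exprS IH comp_polyM.
Qed.

Lemma comp_sumZ (n : nat) (c : nat -> R) u :
  (\poly_(j < n) c j) \Po u = \sum_(j < n) c j *: u ^+ j.
Proof.
rewrite poly_def; elim: n => [|n IH]; first by rewrite !big_ord0 comp_poly0.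
by rewrite !big_ord_recr /= comp_polyD comp_polyZ comp_Xn_poly IH.
Qed.

Lemma dpow n a c k : eqm n a^`() (c * a ^+ 2) ->
  eqm n (a ^+ k)^`() (k%:R *: (c * a ^+ k.+1)).
Proof.
move=> h; rewrite deriv_exp.
case: k => [|k]; first by rewrite mulr0n scale0r.
apply: (@eqm_trans _ _ ((c * a ^+ 2) * a ^+ k *+ k.+1)).
  move=> i hi; rewrite !coefMn; congr (_ *+ _).
  by rewrite (eqmM _ _ _ _ _ h (eqm_refl _ (a ^+ k))).
apply: eqm_eq; rewrite scaler_nat /= !exprS expr0; ring.
Qed.

End Eqm.


Lemma hockey (i m : nat) : (\sum_(j < m.+1) 'C((i + j).-1, j) = 'C(i + m, m))%N.
Proof.
elim: m => [|m IH]; first by rewrite big_ord1 !bin0.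
rewrite big_ord_recr /= IH addnS binS /=.
by rewrite addnC.
Qed.

Section Geo.
Context {R : numFieldType}.

Definition gpoly (K : nat) (a : R) : {poly R} := \poly_(m < K.+1) a ^+ m.

Lemma coef_gpow K a i m : (m < K.+1)%N ->
  (gpoly K a ^+ i)`_m = a ^+ m * ('C((i + m).-1, m))%:R.
Proof.
elim: i m => [|i IH] m hm.
  rewrite expr0 coef1 add0n; case: m hm => [|m] hm; first by rewrite bin0 expr0 mulr1.
  by rewrite bin_small ?mulr0.
rewrite exprS coefM.
transitivity (\sum_(j < m.+1) a ^+ m * ('C((i + (m - j)).-1, m - j))%:R).
  apply: eq_bigr => j _; have hj := ltn_ord j.
  rewrite coef_poly ifT; last by lia.
  rewrite IH; last by lia.
  by rewrite mulrA -exprD subnKC //; lia.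
rewrite -mulr_sumr -natr_sum; congr (_ * _%:R).
rewrite -(big_mkord xpredT (fun j => 'C((i + (m - j)).-1, m - j))) big_nat_rev big_mkord /=.
transitivity (\sum_(j < m.+1) 'C((i + j).-1, j))%N.
  apply: eq_bigr => j _; have hj := ltn_ord j.
  have -> : (m - (0 + m.+1 - j.+1) = j)%N by lia.
  by [].
by rewrite hockey.
Qed.

Lemma dgpoly K a : eqm K (gpoly K a)^`() (a%:P * gpoly K a ^+ 2).
Proof.
move=> i hi; rewrite coef_deriv coefCM coef_gpow; last by lia.
rewrite coef_poly ifT; last by lia.
rewrite add2n /= binSn exprS mulrA mulr_natr.
by [].
Qed.

End Geo.


Section Pick.
Context {R : numFieldType}.
Lemma sum_nat_pick (m n i : nat) (F : nat -> R) :
  \sum_(m <= k < n) (if k == i then F k else 0) = if (m <= i < n)%N then F i else 0.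
Proof.
elim: n => [|n IH]; first by rewrite big_geq // andbF.
case: (leqP m n) => hmn.
  rewrite big_nat_recr //= IH.
  case: (eqVneq n i) => [<-|hni]; first by rewrite ltnn andbF add0r hmn ltnSn.
  rewrite addr0; congr (if _ then _ else _).
  by apply/idP/idP; lia.
rewrite big_geq //; case: ifP => //; lia.
Qed.

Lemma natS_neq0 (n : nat) : (1 + n%:R : R) != 0.
Proof. by rewrite addrC natr1 pnatr_eq0. Qed.

Lemma natD_neq0 (k n : nat) : ((k.+1)%:R + n%:R : R) != 0.
Proof. by rewrite -natrD pnatr_eq0. Qed.

Lemma deriv5_eqm n (A B C P E dA dB dC dP dE : {poly R}) :
  eqm n A^`() dA -> eqm n B^`() dB -> eqm n C^`() dC -> eqm n P^`() dP ->
  eqm n E^`() dE ->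
  eqm n (A * B * C * (P * E))^`()
    (dA * B * C * P * E + A * dB * C * P * E + A * B * dC * P * E
     + A * B * C * dP * E + A * B * C * P * dE).
Proof.
move=> hA hB hC hP hE.
have -> : (A * B * C * (P * E))^`() = A^`() * B * C * P * E + A * B^`() * C * P * E
   + A * B * C^`() * P * E + A * B * C * P^`() * E + A * B * C * P * E^`().
  rewrite !derivM; ring.
have r := eqm_refl n.
by repeat apply: eqmD; repeat apply: eqmM.
Qed.
End Pick.

Section Obj.
Context {R : numFieldType}.
Variables (lam x : R) (K : nat).
Hypothesis hlam : lam != 0.

Definition Lt := logtr lam K.
Definition uu : {poly R} := lam^-1 *: Lt.
Definition ww : {poly R} := gpoly K (- lam).
Definition gp : {poly R} := gpoly K (- 2%:R^-1).
Definition hp : {poly R} := gpoly K (-1).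
Definition bp : {poly R} := \poly_(j < K.+1) (ffact x j / j`!%:R).
Definition pp := gp \Po uu.
Definition qq := hp \Po uu.
Definition EE := bp \Po uu.
Definition GG := pp * EE.

Lemma coef_logtr n i : (logtr lam n)`_i =
  if (0 < i <= n)%N then (-1) ^+ i.-1 * lam ^+ i / i%:R else 0.
Proof.
rewrite /logtr coef_sum.
rewrite (eq_bigr (fun k => if k == i then (-1) ^+ k.-1 * lam ^+ k / k%:R else 0)).
  by rewrite sum_nat_pick.
move=> k _; rewrite coefZ coefXn eq_sym.
by case: eqP => [->|_]; rewrite ?mulr1 ?mulr0.
Qed.

Lemma uu0 : uu`_0 = 0.
Proof. by rewrite coefZ coef_logtr /= mulr0. Qed.

Lemma duu : eqm K uu^`() ww.
Proof.
move=> i hi; rewrite coef_deriv coefZ coef_logtr coef_poly ifT; last by lia.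
rewrite ifT; last by lia.
rewrite /= -mulr_natr [(- lam) ^+ _]exprNn exprS.
have h : (i.+1)%:R != 0 :> R by rewrite pnatr_eq0.
field; by rewrite ?hlam ?natS_neq0.
Qed.

Lemma ffactS (y : R) n : ffact y n.+1 = ffact y n * (y - n%:R).
Proof. by rewrite /ffact big_ord_recr. Qed.

Lemma fact_neq0 n : (n`!%:R : R) != 0.
Proof. by rewrite pnatr_eq0 -lt0n fact_gt0. Qed.

Lemma alt_sum i : x * \sum_(j < i.+1) (-1) ^+ j * (ffact x (i - j) / (i - j)`!%:R)
  = ffact x i.+1 / i.+1`!%:R *+ i.+1.
Proof.
elim: i => [|i IH].
  rewrite big_ord1 /= /ffact big_ord1 big_ord0 /= expr0 subr0 mulr1n !mul1r.
  by rewrite mulr1n.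
rewrite big_ord_recl /= subn0.
have -> : \sum_(j < i.+1) (-1) ^+ (bump 0 j) * (ffact x (i.+1 - bump 0 j) / (i.+1 - bump 0 j)`!%:R)
   = - \sum_(j < i.+1) (-1) ^+ j * (ffact x (i - j) / (i - j)`!%:R).
  rewrite -sumrN; apply: eq_bigr => j _.
  by rewrite /bump /= add1n subSS exprS mulN1r mulNr.
rewrite mulrDr mulrN IH !ffactS !factS !natrM -[_ *+ i.+1]mulr_natr -[_ *+ i.+2]mulr_natr.
have h1 := fact_neq0 i.
have h2 : (i.+1%:R : R) != 0 by rewrite pnatr_eq0.
have h3 : (i.+2%:R : R) != 0 by rewrite pnatr_eq0.
rewrite expr0 mul1r -[_ *+ i.+1]mulr_natr.
field.
by rewrite ?fact_neq0 ?natS_neq0 ?natD_neq0.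
Qed.

Lemma dbp : eqm K bp^`() (x%:P * (hp * bp)).
Proof.
move=> i hi; rewrite coef_deriv coefCM coefM coef_poly ifT; last by lia.
rewrite -alt_sum; congr (_ * _); apply: eq_bigr => j _.
have hj := ltn_ord j.
rewrite !coef_poly !ifT //; lia.
Qed.

Lemma dcomp g c : eqm K g^`() (c%:P * g ^+ 2) ->
  eqm K (g \Po uu)^`() ((c%:P * ww) * (g \Po uu) ^+ 2).
Proof.
move=> h; rewrite deriv_comp.
apply: (@eqm_trans _ _ _ (((c%:P * g ^+ 2) \Po uu) * ww)).
  apply: eqmM; last exact: duu.
  apply: eqm_comp; [exact: uu0 | exact: h | exact: eqm_refl].
apply: eqm_eq; rewrite comp_polyM comp_polyC -comp_polyXe; ring.
Qed.

Lemma dww : eqm K ww^`() ((- lam)%:P * ww ^+ 2).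
Proof. exact: dgpoly. Qed.

Lemma dpp : eqm K pp^`() (((- 2%:R^-1)%:P * ww) * pp ^+ 2).
Proof. apply: dcomp; exact: dgpoly. Qed.

Lemma dqq : eqm K qq^`() (((-1)%:P * ww) * qq ^+ 2).
Proof. apply: dcomp; exact: dgpoly. Qed.

Lemma dEE : eqm K EE^`() (x%:P * ww * qq * EE).
Proof.
rewrite deriv_comp.
apply: (@eqm_trans _ _ _ (((x%:P * (hp * bp)) \Po uu) * ww)).
  apply: eqmM; last exact: duu.
  apply: eqm_comp; [exact: uu0 | exact: dbp | exact: eqm_refl].
apply: eqm_eq; rewrite !comp_polyM comp_polyC /qq /EE; ring.
Qed.

Definition TT (N i j : nat) := ww ^+ N * pp ^+ i * qq ^+ j * GG.

Lemma dTT N i j : eqm K (TT N i j)^`()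
  ((- (N%:R * lam))%:P * TT N.+1 i j + (- (i.+1%:R / 2%:R))%:P * TT N.+1 i.+1 j
   + (x - j%:R)%:P * TT N.+1 i j.+1).
Proof.
apply: eqm_trans.
  apply: deriv5_eqm.
  - exact: (dpow _ _ _ N dww).
  - exact: (dpow _ _ _ i dpp).
  - exact: (dpow _ _ _ j dqq).
  - exact: dpp.
  - exact: dEE.
apply: eqm_eq; rewrite /TT /GG !exprS expr0 -!mul_polyC.
rewrite !(rmorphN, rmorphM, rmorphB, rmorph_nat).
ring.
Qed.
End Obj.


Section Rec.
Context {R : numFieldType}.
Variable (x : R).

Lemma harm0 j N : (N < j)%N -> (0 < j)%N -> harm R j N = 0.
Proof. by case: j => [//|j] hj _ /=; rewrite big_geq. Qed.

Lemma harmS j N : harm R j.+1 N.+1 = harm R j.+1 N + harm R j N / N.+1%:R.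
Proof.
case: (leqP j N) => hjN.
  by rewrite /= big_nat_recr //=.
rewrite /= !big_geq // ?harm0 ?mul0r ?addr0 //; lia.
Qed.

Lemma chps_i0 i : chps i 0 = 1%N.
Proof. by elim: i => [//|i IH] /=; rewrite big_ord1. Qed.

Lemma chpsS i j : chps i.+1 j.+1 = (chps i j.+1 + chps i.+1 j)%N.
Proof. by rewrite /= big_ord_recr /= addnC. Qed.

Lemma harm_0 N : harm R 0 N = 1. Proof. by []. Qed.
Lemma ffact0 : ffact x 0 = 1. Proof. by rewrite /ffact big_ord0. Qed.
Lemma ffact1 : ffact x 1 = x. Proof. by rewrite /ffact big_ord1 subr0. Qed.
Lemma fact0' : (0`!%:R : R) = 1. Proof. by []. Qed.
Lemma fact1' : (1`!%:R : R) = 1. Proof. by []. Qed.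
Lemma chps0 j : chps 0 j = 1%N. Proof. by []. Qed.

Ltac simpc := do 2 rewrite ?subn0 ?subSS ?subn1 ?chps_i0 ?chps0 ?harm_0 ?ffact0 ?ffact1 ?fact1' ?fact0' ?factS ?natrM ?fact0' ?exprS ?expr0 /=.

Definition ap (N i j : nat) : R :=
  if i + j == 0 then (N == 0)%:R
  else if (N < i + j)%N then 0 else acoef i (i + j) N x.

Lemma ap00 N : ap N 0 0 = (N == 0)%:R. Proof. by []. Qed.

Lemma ap0 N i j : (N < i + j)%N -> (0 < i + j)%N -> ap N i j = 0.
Proof. by move=> h1 h2; rewrite /ap ifN ?h1 // -lt0n. Qed.

Lemma ap_form N i j : (0 < i + j)%N -> (i + j <= N.+1)%N -> (0 < N)%N ->
  ap N i j = (-1) ^+ (N - j) * i`!%:R * (chps i j)%:R * (N.-1)`!%:R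
             * harm R (i + j).-1 N.-1 * ffact x j.
Proof.
move=> h1 h2 h3; rewrite /ap ifN -?lt0n //.
case: ltnP => h4.
  by rewrite harm0 ?mulr0 ?mul0r //; lia.
rewrite /acoef /H.
have -> : (N + i - (i + j) = N - j)%N by lia.
by have -> : (i + j - i = j)%N by lia.
Qed.

Lemma arec N i j : ap N.+1 i j = - N%:R * ap N i j
  + (if i is i'.+1 then - i%:R * ap N i' j else 0)
  + (if j is j'.+1 then (x - j'%:R) * ap N i j' else 0).
Proof.
have [h0|[h1|h2]] : (i + j = 0 \/ i + j = 1 \/ 2 <= i + j)%N by lia.
- have [-> ->] : (i = 0 /\ j = 0)%N by lia.
  rewrite /ap /=; case: N => [|N] /=; ring.
- have [[-> ->]|[-> ->]] : ((i = 1 /\ j = 0) \/ (i = 0 /\ j = 1))%N.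
    by case: i h1 => [|[|i]] h1; case: j h1 => [|[|j]] h1 //; [right|left]; lia.
  + rewrite (ap_form N.+1 1 0) //; case: N => [|M].
      rewrite (ap0 0 1 0) // ap00; simpc; ring.
    rewrite (ap_form M.+1 1 0) // ap00; simpc; ring.
  + rewrite (ap_form N.+1 0 1) //; case: N => [|M].
      rewrite (ap0 0 0 1) // ap00; simpc; ring.
    rewrite (ap_form M.+1 0 1) // ap00; simpc; ring.
case: (ltnP N.+1 (i + j)) => hN.
  rewrite ap0 //; last lia.
  rewrite ap0 ?mulr0 ?add0r; [|lia|lia].
  case: i h2 hN => [|i'] h2 hN; case: j h2 hN => [|j'] h2 hN;
    rewrite ?ap0 ?mulr0 ?addr0 //; lia.
case: N hN => [|M] hN; first by lia.
rewrite (ap_form M.+2 i j) ?(ap_form M.+1 i j) //; try lia.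
have hM : (M.+1%:R : R) != 0 by rewrite pnatr_eq0.
case: i h2 hN => [|i'] h2 hN; case: j h2 hN => [|j'] h2 hN //.
-
  rewrite (ap_form M.+1 0 j') //; try lia.
  have -> : ((0 + j'.+1).-1 = (0 + j').-1.+1)%N by lia.
  rewrite harmS ffactS !chps0.
  case: (leqP j'.+1 M.+1) => hj.
    have -> : (M.+2 - j'.+1 = (M.+1 - j'.+1).+1)%N by lia.
    have -> : (M.+1 - j' = (M.+1 - j'.+1).+1)%N by lia.
    simpc.
    field; by rewrite ?natS_neq0.
  have ej : j' = M.+1 by lia.
  subst j'.
  rewrite (harm0 (0 + M.+1).-1.+1 M) //; try lia.
  simpc.
  field; by rewrite ?natS_neq0.
-
  rewrite (ap_form M.+1 i' 0) //; try lia.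
  have -> : ((i'.+1 + 0).-1 = (i' + 0).-1.+1)%N by lia.
  rewrite harmS !chps_i0 !subn0 factS natrM.
  simpc.
  field; by rewrite ?natS_neq0.
- rewrite (ap_form M.+1 i' j'.+1) ?(ap_form M.+1 i'.+1 j') //; try lia.
  have -> : ((i'.+1 + j'.+1).-1 = (i'.+1 + j').-1.+1)%N by lia.
  have -> : ((i' + j'.+1).-1 = (i'.+1 + j').-1)%N by lia.
  rewrite harmS chpsS natrD ffactS factS natrM.
  have -> : (M.+2 - j'.+1 = (M.+1 - j'.+1).+1)%N by lia.
  have -> : (M.+1 - j' = (M.+1 - j'.+1).+1)%N by lia.
  simpc.
  field; by rewrite ?natS_neq0.
Qed.
End Rec.


Section SS.
Context {R : numFieldType}.
Variables (lam x : R) (K : nat).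
Hypothesis hlam : lam != 0.

Definition cc (N i j : nat) : R := lam ^+ N * (ap x N i j * lam ^- (i + j) * 2%:R ^- i).

Lemma cc0 N i j : (N < i + j)%N -> cc N i j = 0.
Proof. by move=> h; rewrite /cc ap0 ?mul0r ?mulr0 //; lia. Qed.

Lemma crec N i j : cc N.+1 i j = cc N i j * (- (N%:R * lam))
  + (if i is i'.+1 then cc N i' j * (- (i'.+1%:R / 2%:R)) else 0)
  + (if j is j'.+1 then cc N i j' * (x - j'%:R) else 0).
Proof.
have h2 : (2%:R : R) != 0 by rewrite pnatr_eq0.
rewrite /cc arec.
case: i => [|i']; case: j => [|j']; rewrite ?addSn ?addnS ?add0n ?addn0 !exprS.
- field; by rewrite ?hlam ?expf_neq0.
- field; by rewrite ?hlam ?expf_neq0.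
- field; by rewrite ?hlam ?h2 ?expf_neq0.
- field; by rewrite ?hlam ?h2 ?expf_neq0.
Qed.

Definition SS (N : nat) : {poly R} :=
  \sum_(0 <= i < N.+2) \sum_(0 <= j < N.+2) cc N i j *: TT lam x K N i j.

Lemma trim_last (F : nat -> {poly R}) n : F n = 0 ->
  \sum_(0 <= j < n.+1) F j = \sum_(0 <= j < n) F j.
Proof. by move=> h; rewrite big_nat_recr //= h addr0. Qed.

Lemma S_step N : eqm K (SS N)^`() (SS N.+1).
Proof.
pose T' := TT lam x K N.+1.
apply: (@eqm_trans _ _ _ (\sum_(0 <= i < N.+2) \sum_(0 <= j < N.+2) cc N i j *:
   ((- (N%:R * lam))%:P * T' i j + (- (i.+1%:R / 2%:R))%:P * T' i.+1 j
   + (x - j%:R)%:P * T' i j.+1))).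
  rewrite /SS linear_sum; apply: eqm_sum => i _.
  rewrite linear_sum; apply: eqm_sum => j _.
  by rewrite linearZ /=; apply: eqmZ; apply: dTT.
apply: eqm_eq.
transitivity (\sum_(0 <= i < N.+2) \sum_(0 <= j < N.+2) (cc N i j * (- (N%:R * lam))) *: T' i j
  + \sum_(0 <= i < N.+2) \sum_(0 <= j < N.+2) (cc N i j * (- (i.+1%:R / 2%:R))) *: T' i.+1 j
  + \sum_(0 <= i < N.+2) \sum_(0 <= j < N.+2) (cc N i j * (x - j%:R)) *: T' i j.+1).
  rewrite -!big_split; apply: eq_bigr => i _; rewrite -!big_split; apply: eq_bigr => j _.
  by rewrite !scalerDr !mul_polyC !scalerA.
rewrite /SS.
transitivity (\sum_(0 <= i < N.+3) \sum_(0 <= j < N.+3)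
   ((cc N i j * (- (N%:R * lam))) *: T' i j
   + (if i is i'.+1 then cc N i' j * (- (i'.+1%:R / 2%:R)) else 0) *: T' i j
   + (if j is j'.+1 then cc N i j' * (x - j'%:R) else 0) *: T' i j)); last first.
  apply: eq_bigr => i _; apply: eq_bigr => j _.
  by rewrite crec !scalerDl.
symmetry; under eq_bigr => i _ do rewrite !big_split; rewrite !big_split /=; symmetry.
congr (_ + _ + _).
- rewrite [RHS]trim_last; last by apply: big1 => j _; rewrite cc0 ?mul0r ?scale0r //; lia.
  apply: eq_bigr => i _; rewrite [RHS]trim_last // cc0 ?mul0r ?scale0r //; lia.
- rewrite [RHS]big_nat_recl //= [in RHS]big1 ?add0r; last by move=> j _; rewrite scale0r.
  apply: eq_bigr => i _; rewrite [RHS]trim_last //.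
  rewrite cc0 ?mul0r ?scale0r //; lia.
- rewrite [RHS]trim_last; last first.
    apply: big1 => j _; case: j => [|j]; rewrite ?scale0r // cc0 ?mul0r ?scale0r //; lia.
  apply: eq_bigr => i _; rewrite [RHS]big_nat_recl //= scale0r add0r.
  by [].
Qed.
End SS.


Section Ind.
Context {R : numFieldType}.
Variables (lam x : R) (K : nat).
Hypothesis hlam : lam != 0.

Lemma SS0 : SS lam x K 0 = GG lam x K.
Proof.
rewrite /SS !big_nat_recl //= !big_geq // !addr0.
rewrite (cc0 _ _ _ 0 0 1) ?(cc0 _ _ _ 0 1 0) ?(cc0 _ _ _ 0 1 1) // !scale0r !addr0.
rewrite /cc ap00 addn0 !expr0 !invr1 !mul1r /TT !expr0 !mul1r scale1r.
by [].
Qed.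

Lemma derivn_SS N : eqm (K.+1 - N) ((GG lam x K)^`(N)) (SS lam x K N).
Proof.
elim: N => [|N IH]; first by rewrite subn0 SS0 derivn0; apply: eqm_refl.
rewrite derivnS subnS.
apply: eqm_trans; first exact: (eqm_deriv _ _ _ IH).
apply: (eqm_le _ _ _ _ _ (S_step lam x K hlam N)); lia.
Qed.

Lemma chgen_GG : chgen lam x K = GG lam x K.
Proof.
rewrite /chgen /GG /pp /EE /gp /bp /gpoly !comp_sumZ.
congr (_ * _); apply: eq_bigr => j _; rewrite /uu exprZn scalerA /Lt.
  by rewrite -exprMn invfM mulNr.
by rewrite exprVn.
Qed.
End Ind.

Section Coef.
Context {R : numFieldType}.
Variables (lam x : R).
Hypothesis hlam : lam != 0.

Lemma GG_mono s K : (s <= K)%N -> eqm s.+1 (GG lam x s) (GG lam x K).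
Proof.
move=> hs.
have hu : eqm s.+1 (uu lam s) (uu lam K).
  move=> i hi; rewrite !coefZ !coef_logtr.
  have e : (0 < i <= s)%N = (0 < i <= K)%N by apply/idP/idP; lia.
  by rewrite e.
have hg a : eqm s.+1 (gpoly s a) (gpoly K a).
  by move=> i hi; rewrite !coef_poly hi ifT //; lia.
have hb : eqm s.+1 (bp x s) (bp x K).
  by move=> i hi; rewrite !coef_poly hi ifT //; lia.
apply: eqmM.
  apply: eqm_comp; [exact: uu0 | exact: hg | exact: hu].
apply: eqm_comp; [exact: uu0 | exact: hb | exact: hu].
Qed.

Lemma Ch_coef s K : (s <= K)%N -> Ch s lam x = s`!%:R * (GG lam x K)`_s.
Proof.
move=> hs; rewrite /Ch (chgen_GG lam x s); congr (_ * _).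
by apply: GG_mono.
Qed.
End Coef.


Section Coef4.
Context {R : numFieldType}.
Implicit Types A B C D : {poly R}.

Lemma coef2' b A B a : (a < b)%N ->
  (A * B)`_a = \sum_(l < b) (if (l <= a)%N then A`_l * B`_(a - l) else 0).
Proof.
move=> hab; rewrite coefM.
rewrite (@sum_extend _ (fun l => if (l <= a)%N then A`_l * B`_(a - l) else 0) a.+1 b) //.
  by apply: eq_bigr => l _; rewrite ifT // -ltnS.
by move=> m hm _; rewrite ifN //; lia.
Qed.

Lemma pick_cond b l a (G : nat -> R) : (a < b)%N ->
  \sum_(t < b | addn l t == a) G t = if (l <= a)%N then G (a - l)%N else 0.
Proof.
move=> hab; rewrite big_mkcond /= -(big_mkord xpredT (fun t => if (l + t == a)%N then G t else 0)).
case: (leqP l a) => hla.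
  rewrite (eq_bigr (fun t => if t == (a - l)%N then G t else 0)).
    by rewrite sum_nat_pick ifT //; lia.
  move=> t _; have -> : (l + t == a)%N = (t == a - l)%N by apply/eqP/eqP; lia.
  by [].
rewrite big1 // => t _; rewrite ifN //; lia.
Qed.

Lemma coef4 A B C D a : (A * B * C * D)`_a =
  \sum_(l < a.+1) \sum_(e < a.+1) \sum_(f < a.+1) \sum_(s < a.+1 | (l + e + f + s == a)%N)
    A`_l * B`_e * C`_f * D`_s.
Proof.
rewrite -!mulrA (coef2' _ _ _ _ (ltnSn a)).
apply: eq_bigr => l _.
under eq_bigr => e _ do under eq_bigr => f _ do
  rewrite (pick_cond _ (l + e + f) a (fun s => A`_l * B`_e * C`_f * D`_s) (ltnSn a)).
case: (leqP l a) => hla; last first.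
  rewrite big1 // => e _; rewrite big1 // => f _; rewrite ifN //; lia.
rewrite (coef2' _ _ _ _ (_ : (a - l < a.+1)%N)); last by lia.
rewrite mulr_sumr; apply: eq_bigr => e _.
case: (leqP e (a - l)) => hel; last first.
  rewrite mulr0 big1 // => f _; rewrite ifN //; lia.
rewrite (coef2' _ _ _ _ (_ : (a - l - e < a.+1)%N)); last by lia.
rewrite mulr_sumr mulr_sumr; apply: eq_bigr => f _.
case: (leqP f (a - l - e)) => hf; last first.
  by rewrite !mulr0 ifN //; lia.
rewrite ifT; last by lia.
have -> : (a - l - e - f = a - (l + e + f))%N by lia.
by rewrite !mulrA.
Qed.
End Coef4.


Lemma stirS n l : stirling1 n.+1 l =
  (if l is l'.+1 then stirling1 n l' else 0) - n%:Z * stirling1 n l.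
Proof.
rewrite /stirling1 big_ord_recr /= mulrBr coefB coefMX coefMC.
by case: l => [|l] //=; rewrite mulrC.
Qed.

Lemma stir0 l : stirling1 0 l = (l == 0)%:R.
Proof. by rewrite /stirling1 big_ord0 coef1. Qed.

Lemma stir_n0 n : stirling1 n.+1 0 = 0.
Proof.
elim: n => [|n IH]; first by rewrite stirS stir0 /= mul0r subr0.
by rewrite stirS IH mulr0 subr0.
Qed.

Section Stir.
Context {R : numFieldType}.
Variables (lam : R) (K : nat).
Hypothesis hlam : lam != 0.

Lemma ww1 : eqm K.+1 ((1 + lam *: 'X) * ww lam K) 1.
Proof.
move=> i hi; rewrite mulrDl mul1r -scalerAl coefD coefZ coefXM coef1.
rewrite /ww /gpoly coef_poly hi.
case: i hi => [|i] hi /=; first by rewrite mulr0 addr0.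
rewrite coef_poly ifT; last by lia.
rewrite exprS; ring.
Qed.

Lemma uu_ode m d : (d < K)%N ->
  (uu lam K ^+ m.+1)`_d.+1 *+ d.+1 + lam * ((uu lam K ^+ m.+1)`_d *+ d)
  = (uu lam K ^+ m)`_d *+ m.+1.
Proof.
move=> hd.
have e1 : eqm K ((uu lam K ^+ m.+1)^`()) ((uu lam K ^+ m * ww lam K) *+ m.+1).
  move=> i hi; rewrite deriv_exp /= !coefMn; congr (_ *+ _).
  by rewrite mulrC (eqmM _ _ _ _ _ (eqm_refl K (uu lam K ^+ m)) (duu lam K hlam)).
have e2 : eqm K ((1 + lam *: 'X) * (uu lam K ^+ m.+1)^`()) (uu lam K ^+ m *+ m.+1).
  apply: (eqm_trans _ _ _ _ (eqmM _ _ _ _ _ (eqm_refl K (1 + lam *: 'X)) e1)).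
  apply: (@eqm_trans _ _ _ (((1 + lam *: 'X) * ww lam K) * uu lam K ^+ m *+ m.+1)).
    by apply: eqm_eq; rewrite mulrnAr; congr (_ *+ _); ring.
  move=> i hi; rewrite !coefMn; congr (_ *+ _).
  by rewrite (eqmM _ _ _ _ _ (eqm_le _ _ _ _ (leqnSn K) ww1) (eqm_refl _ (uu lam K ^+ m))) ?mul1r.
rewrite -[RHS]coefMn -(e2 d hd) mulrDl mul1r -scalerAl coefD coefZ coefXM !coef_deriv.
by case: d hd {e2} => [|d] hd //=; rewrite mulr0n mulr0.
Qed.

Lemma uu_stir d m : (d <= K)%N ->
  d`!%:R * (uu lam K ^+ m)`_d = m`!%:R * lam ^+ d * lam ^- m * (stirling1 d m)%:~R.
Proof.
elim: d m => [|d IH] m hd.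
  case: m => [|m].
    by rewrite !expr0 coef1 stir0 /= divr1 !mulr1.
  by rewrite (coefX_low _ (uu0 lam K) m.+1 0) // stir0 /= !mulr0.
case: m => [|m].
  by rewrite expr0 coef1 stir_n0 /= !mulr0.
have hd' : (d < K)%N by lia.
have ode := uu_ode m d hd'.
have h1 := IH m (ltnW hd').
have h2 := IH m.+1 (ltnW hd').
rewrite stirS intrB intrM /= factS natrM.
have -> : (uu lam K ^+ m.+1)`_d.+1 = ((uu lam K ^+ m)`_d *+ m.+1 - lam * ((uu lam K ^+ m.+1)`_d *+ d)) / d.+1%:R.
  rewrite -ode; field; by rewrite natS_neq0.
have hf := fact_neq0 (R:=R) d.
have hfm := fact_neq0 (R:=R) m.
set A := (uu lam K ^+ m)`_d; set B := (uu lam K ^+ m.+1)`_d.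
transitivity ((d`!%:R * A) *+ m.+1 - lam * ((d`!%:R * B) *+ d)).
  field; by rewrite ?natS_neq0.
rewrite h1 h2 factS natrM !exprS (_ : (d%:~R : R) = d%:R) //.
field; by rewrite ?hlam ?expf_neq0.
Qed.
End Stir.


Section Inner.
Context {R : numFieldType}.

Lemma ffact_nat (q m : nat) : ffact (q%:R : R) m = (q ^_ m)%:R.
Proof.
elim: m => [|m IH]; first by rewrite /ffact big_ord0 ffactn0.
rewrite ffactS IH ffactnSr natrM.
case: (leqP m q) => h; first by rewrite natrB.
by rewrite ffact_small ?mul0r.
Qed.

Lemma ffact_bin (p m : nat) : ffact (((p + m)%:R : R) - 1) m = ('C((p + m).-1, m) * m`!)%:R.
Proof.
rewrite bin_ffact.
case: (posnP (p + m)) => h.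
  have -> : m = 0%N by lia.
  by rewrite /ffact big_ord0 ffactn0.
have -> : ((p + m)%:R : R) - 1 = ((p + m).-1)%:R.
  by rewrite -{1}(prednK h) -natr1 addrK.
by rewrite ffact_nat.
Qed.

Variables (lam x : R) (K : nat).
Hypothesis hlam : lam != 0.

Definition VV (m : nat) : {poly R} := \poly_(e < K.+1) (uu lam K ^+ m)`_(e + m).

Lemma uuV m : eqm K.+1 (uu lam K ^+ m) ('X^m * VV m).
Proof.
move=> d hd; rewrite coefXnM.
case: ltnP => h; first by rewrite (coefX_low _ (uu0 lam K)).
by rewrite coef_poly ifT ?subnK //; lia.
Qed.

Definition Fin4 (N m n a : nat) : R :=
  \sum_(l < a.+1) \sum_(e < a.+1) \sum_(f < a.+1) \sum_(s < a.+1 | (l + e + f + s == a)%N)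
        (-1) ^+ l * lam ^+ (a - s)
        * (multi4 R a l e f s / ('C(e + m, m)%:R * 'C(f + n, n)%:R))
        * ffact (N%:R + l%:R - 1) l
        * (stirling1 (e + m) m)%:~R * (stirling1 (f + n) n)%:~R
        * Ch s lam x.

Definition Fa (N k i r m n a : nat) : R :=
  multi3 R k m n a * (- 2%:R^-1) ^+ m * (-1) ^+ n
      * ffact ((i + m)%:R - 1) m * ffact ((r - i + n)%:R - 1) n * Fin4 N m n a.

Lemma sum_prod4 b (W G : {poly R}) (A B : nat -> {poly R}) :
  W * (\sum_(m < b) A m) * (\sum_(n < b) B n) * G =
  \sum_(m < b) \sum_(n < b) W * A m * B n * G.
Proof.
rewrite (big_distrr W) /= (big_distrl (\sum_(n < b) B n)) /= (big_distrl G) /=.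
apply: eq_bigr => m _.
rewrite (big_distrr (W * A m)) /= (big_distrl G) /=.
by [].
Qed.

Lemma TT_split N i j k : (k <= K)%N ->
  eqm k.+1 (TT lam x K N i j)
   (\sum_(m < k.+1) \sum_(n < k.+1)
      ((gpoly K (- 2%:R^-1) ^+ i)`_m * (gpoly K (-1) ^+ j)`_n) *:
        ('X^(m + n) * (ww lam K ^+ N * VV m * VV n * GG lam x K))).
Proof.
move=> hk.
have hP : eqm k.+1 (pp lam K ^+ i) (\sum_(m < k.+1) (gpoly K (- 2%:R^-1) ^+ i)`_m *: ('X^m * VV m)).
  rewrite /pp comp_polyXe.
  apply: eqm_trans; first exact: (comp_trunc _ _ _ (uu0 lam K)).
  apply: eqm_sum => m _; apply: eqmZ; apply: (eqm_le _ _ _ _ _ (uuV m)); lia.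
have hQ : eqm k.+1 (qq lam K ^+ j) (\sum_(n < k.+1) (gpoly K (-1) ^+ j)`_n *: ('X^n * VV n)).
  rewrite /qq comp_polyXe.
  apply: eqm_trans; first exact: (comp_trunc _ _ _ (uu0 lam K)).
  apply: eqm_sum => m _; apply: eqmZ; apply: (eqm_le _ _ _ _ _ (uuV m)); lia.
apply: eqm_trans.
  rewrite /TT; apply: eqmM; last exact: eqm_refl.
  apply: eqmM; last exact: hQ.
  apply: eqmM; last exact: hP.
  exact: eqm_refl.
apply: eqm_eq.
rewrite (sum_prod4 _ _ _ (fun m => (gpoly K (- 2%:R^-1) ^+ i)`_m *: ('X^m * VV m))
  (fun n => (gpoly K (-1) ^+ j)`_n *: ('X^n * VV n))); apply: eq_bigr => m _; apply: eq_bigr => n _.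
rewrite -!mul_polyC exprD polyCM; ring.
Qed.

Lemma inner N i j k : (k <= K)%N ->
  k`!%:R * (TT lam x K N i j)`_k =
  \sum_(m < k.+1) \sum_(n < k.+1) \sum_(a < k.+1 | (m + n + a == k)%N) Fa N k i (i + j) m n a.
Proof.
move=> hk.
rewrite (TT_split N i j k hk k (ltnSn k)) !coef_sum mulr_sumr; apply: eq_bigr => m _.
rewrite coef_sum mulr_sumr; apply: eq_bigr => n _.
rewrite (pick_cond _ (m + n) k (fun a => Fa N k i (i + j) m n a) (ltnSn k)).
rewrite coefZ coefXnM.
case: ltnP => hmn /=; first by rewrite !mulr0.
set a := (k - (m + n))%N.
rewrite (coef4 (ww lam K ^+ N)) /Fa /Fin4 !mulr_sumr; apply: eq_bigr => l _.
rewrite !mulr_sumr; apply: eq_bigr => e _.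
rewrite !mulr_sumr; apply: eq_bigr => f _.
rewrite !mulr_sumr; apply: eq_bigr => s /eqP hs.
have hm : (m < K.+1)%N by have := ltn_ord m; lia.
have hn : (n < K.+1)%N by have := ltn_ord n; lia.
have hl : (l < K.+1)%N by lia.
have hem : (e + m <= K)%N by lia.
have hfn : (f + n <= K)%N by lia.
have hsK : (s <= K)%N by lia.
rewrite (coef_gpow K _ i m hm) (coef_gpow K _ j n hn) /ww (coef_gpow K _ N l hl).
rewrite /VV !coef_poly !ifT; [|lia|lia].
rewrite (Ch_coef lam x hlam s K hsK).
have u1 := uu_stir lam K hlam (e + m) m hem.
have u2 := uu_stir lam K hlam (f + n) n hfn.
have nz1 := fact_neq0 (R:=R) (e + m).
have nz2 := fact_neq0 (R:=R) (f + n).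
have -> : (uu lam K ^+ m)`_(e + m) = m`!%:R * lam ^+ (e + m) * lam ^- m * (stirling1 (e + m) m)%:~R / (e + m)`!%:R.
  by rewrite -u1; field.
have -> : (uu lam K ^+ n)`_(f + n) = n`!%:R * lam ^+ (f + n) * lam ^- n * (stirling1 (f + n) n)%:~R / (f + n)`!%:R.
  by rewrite -u2; field.
have -> : (a - s = l + e + f)%N by lia.
rewrite -(bin_fact (leq_addl e m)) -(bin_fact (leq_addl f n)) !addnK.
rewrite ffact_bin addKn ffact_bin -natrD ffact_bin.
rewrite /multi3 /multi4 !natrM !exprD [(- lam) ^+ _]exprNn.
have hC1 : ('C(e + m, m)%:R : R) != 0 by rewrite pnatr_eq0 -lt0n bin_gt0 leq_addl.
have hC2 : ('C(f + n, n)%:R : R) != 0 by rewrite pnatr_eq0 -lt0n bin_gt0 leq_addl.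
have := fact_neq0 (R:=R) m; have := fact_neq0 (R:=R) n; have := fact_neq0 (R:=R) a.
have := fact_neq0 (R:=R) l; have := fact_neq0 (R:=R) e; have := fact_neq0 (R:=R) f.
have := fact_neq0 (R:=R) s; have := fact_neq0 (R:=R) k.
move=> f1 f2 f3 f4 f5 f6 f7 f8.
have hlm := expf_neq0 m hlam; have hln := expf_neq0 n hlam.
move: (stirling1 (e + m) m)%:~R (stirling1 (f + n) n)%:~R (GG lam x K)`_s => S1 S2 G.
field.
by rewrite hC1 hC2 f2 f3 f4 f5 f6 f7 f8 hlm hln.
Qed.
End Inner.


Section Tri.
Context {R : numFieldType}.

Lemma trim_cond (G : nat -> R) n B : (n <= B)%N ->
  \sum_(0 <= i < B) (if (i < n)%N then G i else 0) = \sum_(0 <= i < n) G i.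
Proof.
move=> hnB; rewrite !big_mkord.
rewrite (@sum_extend _ (fun i => if (i < n)%N then G i else 0) n B hnB).
  by apply: eq_bigr => i _; rewrite ltn_ord.
by move=> m hm _; rewrite ifN //; lia.
Qed.

Lemma tri_gen (H : nat -> nat -> R) B n : (n <= B)%N ->
  \sum_(0 <= r < n) \sum_(i < r.+1) H i r =
  \sum_(0 <= i < B) \sum_(0 <= j < B) (if (i + j < n)%N then H i (i + j) else 0).
Proof.
elim: n => [|n IH] hn.
  rewrite big_geq // big1 // => i _; rewrite big1 // => j _; by rewrite ifN.
rewrite big_nat_recr //= IH; last by lia.
transitivity (\sum_(0 <= i < B) \sum_(0 <= j < B) ((if (i + j < n)%N then H i (i + j) else 0)
   + (if (i + j == n)%N then H i (i + j) else 0))); last first.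
  apply: eq_bigr => i _; apply: eq_bigr => j _.
  case: ifP => h1; case: ifP => h2; case: ifP => h3; rewrite ?addr0 ?add0r //; try lia.
rewrite [RHS](eq_bigr (fun i => \sum_(0 <= j < B) (if (i + j < n)%N then H i (i + j) else 0)
   + \sum_(0 <= j < B) (if (i + j == n)%N then H i (i + j) else 0))); last first.
  by move=> i _; rewrite big_split.
rewrite big_split /=; congr (_ + _); symmetry.
transitivity (\sum_(0 <= i < B) (if (i < n.+1)%N then H i n else 0)).
  apply: eq_bigr => i _.
  case: (leqP i n) => hi.
    rewrite (eq_bigr (fun j => if j == (n - i)%N then H i n else 0)).
      have c1 : (0 <= n - i < B)%N by apply/andP; split; lia.
      have c2 : (i < n.+1)%N by lia.
      by rewrite sum_nat_pick c1 c2.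
    move=> j _; have -> : (i + j == n)%N = (j == n - i)%N by apply/eqP/eqP; lia.
    by case: eqP => // ->; congr (H i _); lia.
  rewrite ifN; last by lia.
  by rewrite big1 // => j _; rewrite ifN //; lia.
by rewrite trim_cond // big_mkord.
Qed.

Lemma tri_sq (F : nat -> nat -> R) N :
  \sum_(1 <= r < N.+1) \sum_(i < r.+1) F i r =
  \sum_(0 <= i < N.+2) \sum_(0 <= j < N.+2)
     (if (0 < i + j <= N)%N then F i (i + j) else 0).
Proof.
have e := tri_gen (fun i r => if (0 < r)%N then F i r else 0) N.+2 N.+1 (leqnSn N.+1).
rewrite big_ltn // big1 ?add0r in e; last by move=> i _.
transitivity (\sum_(1 <= r < N.+1) \sum_(i < r.+1) (if (0 < r)%N then F i r else 0)).
  by apply: eq_big_nat => r hr; apply: eq_bigr => i _; rewrite ifT //; lia.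
rewrite e; apply: eq_bigr => i _; apply: eq_bigr => j _.
by case: (posnP (i + j)) => h; rewrite ?h //= ltnS.
Qed.
End Tri.

Definition INN {R : numFieldType} (lam x : R) (N k i r : nat) : R :=
  \sum_(m < k.+1) \sum_(n < k.+1) \sum_(a < k.+1 | (m + n + a == k)%N) Fa lam x N k i r m n a.

Definition Fst {R : numFieldType} (lam x : R) (N k i r : nat) : R :=
  lam ^+ N * (acoef i r N x * lam ^- r * (2%:R : R) ^- i * INN lam x N k i r).

Theorem theorem4 (R : numFieldType) (lam x : R) (N k : nat) :
  lam != 0 -> (1 <= N)%N ->
  Ch (k + N) lam x =
  lam ^+ N *
  \sum_(1 <= r < N.+1) \sum_(i < r.+1)
    acoef i r N x * lam ^- r * (2%:R : R) ^- i *
    \sum_(m < k.+1) \sum_(n < k.+1) \sum_(a < k.+1 | (m + n + a == k)%N)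
      multi3 R k m n a * (- 2%:R^-1) ^+ m * (-1) ^+ n
      * ffact ((i + m)%:R - 1) m * ffact ((r - i + n)%:R - 1) n *
      \sum_(l < a.+1) \sum_(e < a.+1) \sum_(f < a.+1) \sum_(s < a.+1
             | (l + e + f + s == a)%N)
        (-1) ^+ l * lam ^+ (a - s)
        * (multi4 R a l e f s / ('C(e + m, m)%:R * 'C(f + n, n)%:R))
        * ffact (N%:R + l%:R - 1) l
        * (stirling1 (e + m) m)%:~R * (stirling1 (f + n) n)%:~R
        * Ch s lam x.

Proof.
move=> hlam hN.
have s1 : Ch (k + N) lam x = k`!%:R * (SS lam x (k + N) N)`_k.
  rewrite (Ch_coef lam x hlam (k + N) (k + N) (leqnn _)).
  have hk : (k < (k + N).+1 - N)%N by lia.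
  rewrite -(derivn_SS lam x (k + N) hlam N k hk) coef_derivn (addnC N k).
  rewrite -(ffact_fact (leq_addl k N)) addnK natrM -mulr_natr; ring.
rewrite s1.
transitivity (\sum_(1 <= r < N.+1) \sum_(i < r.+1) Fst lam x N k i r); last first.
  rewrite mulr_sumr; apply: eq_bigr => r _; rewrite mulr_sumr; apply: eq_bigr => i _.
  by rewrite /Fst /INN /Fa /Fin4.
rewrite (tri_sq (fun i r => Fst lam x N k i r) N).
rewrite /SS coef_sum mulr_sumr; apply: eq_bigr => i _.
rewrite coef_sum mulr_sumr; apply: eq_bigr => j _.
rewrite coefZ mulrCA (inner lam x (k + N) hlam N i j k (leq_addr N k)).
rewrite /Fst /cc /ap -/(INN lam x N k i (i + j)).
case: (posnP (i + j)) => h.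
  by rewrite h (negbTE (lt0n_neq0 hN)) /= !mul0r mulr0 mul0r.
rewrite ?h /=.
case: (leqP (i + j) N) => h2 /=.
  by rewrite !mulrA.
by rewrite !mul0r mulr0 mul0r.
Qed.
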